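(* Let $G=(V,E)$ be an $r$-regular graph on a finite vertex set $V$ with $|V|$ even, and let $d\mapsto\{H(d),A(d)\}$, $d\in\{1,\dots,r\}$, be a HAP table. Then $P(G,HA)$ is non-empty if and only if there exists $v\in\overline{\mathbf N}(PM(V))$ such that $v|_K=\chi_E$ and $v(c)=|\{d\in\{1,\dots,r\}: \{H(d),A(d)\}=c\}|$ for every $c\in C$.
   Context: Let $V$ be a finite set with $|V|$ even. $K=\binom{V}{2}$ is the set of 2-element subsets of $V$. An equal partition of $V$ is an unordered pair $\{H,A\}$ of disjoint subsets with $H\cup A=V$ and $|H|=|A|=|V|/2$; $C=C(V)$ is the set of equal partitions. For $c=\{H,A\}\in C$, $B_c$ is the complete bipartite graph with parts $H$ and $A$. Vectors live in $\mathbb N^{K\cup C}$ with $\mathbb N=\{0,1,2,\dots\}$; $v|_K$ denotes the restriction to coordinates in $K$. For $E\subseteq K$, $\chi_E\in\{0,1\}^K$ is its indicator vector. For $E\subseteq K$ and $c\in C$, $\chi_{E,c}\in\mathbb N^{K\cup C}$ has $K$-components $\chi_E$ and $C$-components equal to the indicator of $c$. $PM(V)=\{\chi_{q,c}: c\in C,\ q\text{ a perfect matching of }B_c\}$. For $\mathcal M\subseteq\mathbb N^{K\cup C}$, $\mathbf N(\mathcal M)$ is the set of finite nonnegative integer combinations of elements of $\mathcal M$, and $\overline{\mathbf N}(\mathcal M)=\{v\in\mathbb N^{K\cup C}: kv\in\mathbf N(\mathcal M)\text{ for some integer }k\ge1\}$. For an $r$-regular graph $G=(V,E)$, a HAP table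 is a map assigning to each $d\in\{1,\dots,r\}$ an equal partition $\{H(d),A(d)\}\in C$. $P(G,HA)$ is the set of real vectors $(x_{e,d})_{e\in K,\,d\in\{1,\dots,r\}}$ satisfying: (1) $\sum_{d=1}^r x_{e,d}=1$ for every $e\in E$, and $x_{e,d}=0$ for every $e\in K\setminus E$ and every $d$; (2) for every $d$ and every $a\in V$, $\sum_{b\in V\setminus\{a\}}x_{\{a,b\},d}=1$; (3) $0\le x_{e,d}\le1$ for all $e\in E$ and all $d$; (4) $x_{\{a,b\},d}=0$ whenever $\{a,b\}\in E$ and $a,b$ are both in $H(d)$ or both in $A(d)$. *)

(* Defs.v *)
From Stdlib Require Import Reals.
From mathcomp Require Import all_boot.
Set Implicit Arguments. Unset Strict Implicit. Unset Printing Implicit Defensive.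

Section Defs.
Variable V : finType.

Definition inK (e : {set V}) : bool := #|e| == 2.

(* C = equal partitions {H, A}, represented as the unordered pair [set H; A] *)
Definition is_eqpart (c : {set {set V}}) : bool :=
  [exists H : {set V}, (c == [set H; ~: H]) && (#|H|.*2 == #|V|)].

(* vectors in N^{K u C}: a K-part and a C-part (coordinates outside K, C must be 0) *)
Definition vec := ({ffun {set V} -> nat} * {ffun {set {set V}} -> nat})%type.

Definition in_KC (v : vec) : Prop :=
  (forall e, ~~ inK e -> v.1 e = 0%N) /\ (forall c, ~~ is_eqpart c -> v.2 c = 0%N).

Definition vzero : vec := ([ffun _ => 0%N], [ffun _ => 0%N]).
Definition vadd (v w : vec) : vec :=
  ([ffun e => v.1 e + w.1 e]%N, [ffun c => v.2 c + w.2 c]%N).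
Definition vscale (k : nat) (v : vec) : vec :=
  ([ffun e => k * v.1 e]%N, [ffun c => k * v.2 c]%N).

Definition chiEc (E : {set {set V}}) (c : {set {set V}}) : vec :=
  ([ffun e => nat_of_bool (e \in E)], [ffun c' => nat_of_bool (c' == c)]).

Definition perfect_matching_B (c : {set {set V}}) (q : {set {set V}}) : Prop :=
  (forall e, e \in q -> inK e /\ forall P, P \in c -> ~~ (e \subset P)) /\
  (forall a : V, #|[set e in q | a \in e]| = 1%N).

Definition PM (v : vec) : Prop :=
  exists c q, is_eqpart c /\ perfect_matching_B c q /\ v = chiEc q c.

Definition Ncone (M : vec -> Prop) (v : vec) : Prop :=
  exists s : seq vec, (forall w, List.In w s -> M w) /\ v = foldr vadd vzero s.

Definition Nbar (M : vec -> Prop) (v : vec) : Prop :=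
  in_KC v /\ exists k : nat, (1 <= k)%N /\ Ncone M (vscale k v).

Definition regular_graph (E : {set {set V}}) (r : nat) : Prop :=
  (forall e, e \in E -> inK e) /\ (forall a : V, #|[set e in E | a \in e]| = r).

(* HAP table, indexed by d : 'I_r (standing for d+1 in {1..r}) *)
Definition HAP_table (r : nat) (HA : 'I_r -> {set {set V}}) : Prop :=
  forall d, is_eqpart (HA d).

Definition P_nonempty (E : {set {set V}}) (r : nat) (HA : 'I_r -> {set {set V}}) : Prop :=
  exists x : {set V} -> 'I_r -> R,
    (forall e, e \in E -> \big[Rplus/R0]_(d < r) x e d = R1) /\
    (forall e d, inK e -> e \notin E -> x e d = R0) /\
    (forall (d : 'I_r) (a : V), \big[Rplus/R0]_(b in V | b != a) x [set a; b] d = R1) /\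
    (forall e d, e \in E -> Rle R0 (x e d) /\ Rle (x e d) R1) /\
    (forall e d, e \in E -> [exists P in HA d, e \subset P] -> x e d = R0).

End Defs.

(* Main.v *)
Require Import Defs.
From HB Require Import structures.
From Stdlib Require Import Reals Lra Lia ZArith QArith Qreals Classical ClassicalEpsilon.
From mathcomp Require Import all_boot.
Set Implicit Arguments. Unset Strict Implicit. Unset Printing Implicit Defensive.
Close Scope Q_scope.

Lemma ar1 (u i nS b s : nat) : u + i = nS + b -> nS + s <= u -> s <= b - i.
Proof. move=> h /leP h2; apply/leP. rewrite -!plusE -!minusE in h h2 *. lia. Qed.

Section Hall.
Variables (T U : finType) (u0 : U).

Definition hallc (L : {set T}) (N : T -> {set U}) :=
  forall S : {set T}, S \subset L -> #|S| <= #|\bigcup_(x in S) N x|.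

Lemma hall n : forall (L : {set T}) (N : T -> {set U}), #|L| <= n -> hallc L N ->
  exists f : T -> U, {in L &, injective f} /\ {in L, forall x, f x \in N x}.
Proof.
elim: n => [|n IH] L N.
  rewrite leqn0 cards_eq0 => /eqP -> _.
  by exists (fun _ => u0); split => x; rewrite inE.
move=> hL hc.
case: (boolP [exists S : {set T}, [&& S != set0, S \proper L & #|\bigcup_(x in S) N x| == #|S|]]).
  case/existsP => S /and3P [Sn0 SpL /eqP Stight].
  have SL := proper_sub SpL.
  set NS := \bigcup_(x in S) N x.
  have cS : #|S| <= n.
    by rewrite -ltnS (leq_trans (proper_card SpL)).
  have [f1 [f1i f1N]] := IH S N cS (fun S' sS' => hc S' (subset_trans sS' SL)).
  pose L' := L :\: S.
  pose N' x := N x :\: NS.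
  have cL' : #|L'| <= n.
    have : #|L'| < #|L|.
      rewrite /L' cardsD (setIidPr SL).
      rewrite -subn_gt0 subKn ?subset_leq_card // lt0n cards_eq0 //.
    by move=> h; rewrite -ltnS (leq_trans h).
  have hc' : hallc L' N'.
    move=> S' sS'.
    have dS' : [disjoint S & S'].
      by rewrite -setI_eq0; apply/eqP/setP => x; rewrite !inE; apply/andP => -[xS xS'];
        move/subsetP: sS' => /(_ x xS'); rewrite !inE xS.
    have := hc (S :|: S'); rewrite subUset SL (subset_trans sS') ?subsetDl // => /(_ isT).
    have -> : #|S :|: S'| = #|S| + #|S'|.
      by rewrite -cardsUI; move: dS'; rewrite -setI_eq0 => /eqP ->; rewrite cards0 addn0.
    rewrite bigcup_setU -/NS -Stight => h.
    have -> : \bigcup_(x in S') N' x = (\bigcup_(x in S') N x) :\: NS.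
      apply/setP => u; rewrite !inE; apply/bigcupP/andP.
        by case=> x xS'; rewrite inE => /andP [a b]; split => //; apply/bigcupP; exists x.
      by case=> a /bigcupP [x xS' ux]; exists x => //; rewrite inE a.
    rewrite cardsD setIC.
    by apply: ar1 (cardsUI _ _) h.
  have [f2 [f2i f2N]] := IH L' N' cL' hc'.
  exists (fun x => if x \in S then f1 x else f2 x); split.
    move=> x y xL yL /=.
    case: ifP => xS; case: ifP => yS.
    - by apply: f1i.
    - move=> e; have := f2N y; rewrite !inE yS yL /= => /(_ isT) /andP [h _].
      by case/negP: h; rewrite -e; apply/bigcupP; exists x => //; apply: f1N.
    - move=> e; have := f2N x; rewrite !inE xS xL /= => /(_ isT) /andP [h _].
      by case/negP: h; rewrite e; apply/bigcupP; exists y => //; apply: f1N.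
    - by apply: f2i; rewrite !inE ?xS ?yS ?xL ?yL.
  move=> x xL /=; case: ifP => xS; first by apply: f1N.
  by have := f2N x; rewrite !inE xS xL => /(_ isT) /andP [].
move=> /existsPn notight.
case: (set_0Vmem L) => [-> | [x xL]].
  by exists (fun _ => u0); split => z; rewrite inE.
have : 0 < #|N x|.
  by have := hc [set x]; rewrite sub1set xL big_set1 cards1 => /(_ isT).
rewrite card_gt0 => /set0Pn [y yN].
pose L' := L :\ x.
pose N' z := N z :\ y.
have cL' : #|L'| <= n.
  by move: hL; rewrite (cardsD1 x L) xL.
have hc' : hallc L' N'.
  move=> S' sS'.
  case: (eqVneq S' set0) => [-> | S'n0]; first by rewrite cards0.
  have xS' : x \notin S'.
    by apply/negP => /(subsetP sS'); rewrite !inE eqxx.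
  have S'L : S' \subset L by apply: subset_trans sS' (subsetDl _ _).
  have S'pL : S' \proper L by apply/properP; split => //; exists x.
  have := notight S'; rewrite S'n0 S'pL /= => hne.
  have hlt : #|S'| < #|\bigcup_(z in S') N z|.
    by rewrite ltn_neqAle eq_sym hne hc.
  have -> : \bigcup_(z in S') N' z = (\bigcup_(z in S') N z) :\ y.
    apply/setP => u; rewrite !inE; apply/bigcupP/andP.
      by case=> z zS'; rewrite !inE => /andP [a b]; split => //; apply/bigcupP; exists z.
    by case=> a /bigcupP [z zS' uz]; exists z => //; rewrite !inE a uz.
  move: hlt; rewrite (cardsD1 y (\bigcup_(z in S') N z)).
  by case: (y \in _) => /=; rewrite ?add1n ?add0n // => /ltnW.
have [f' [f'i f'N]] := IH L' N' cL' hc'.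
exists (fun z => if z == x then y else f' z); split.
  move=> z w zL wL /=.
  case: eqP => zx; case: eqP => wx.
  - by rewrite zx wx.
  - move=> e; have := f'N w; rewrite !inE wL andbT => /(_ (introN eqP wx)) /andP [h _].
    by rewrite e eqxx in h.
  - move=> e; have := f'N z; rewrite !inE zL andbT => /(_ (introN eqP zx)) /andP [h _].
    by rewrite -e eqxx in h.
  - by apply: f'i; rewrite !inE ?zL ?wL andbT; apply/eqP.
move=> z zL /=; case: eqP => [-> // | zx].
by have := f'N z; rewrite !inE zL andbT => /(_ (introN eqP zx)) /andP [].
Qed.
End Hall.

Section K.
Variable V : finType.

Lemma edge_inv (a x a' b' : V) (H : {set V}) : a \in H -> a' \in H -> b' \notin H ->
  [set a; x] = [set a'; b'] -> a = a' /\ x = b'.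
Proof.
move=> aH a'H b'H e.
have ha : a \in [set a'; b'] by rewrite -e !inE eqxx.
have hb : b' \in [set a; x] by rewrite e !inE eqxx orbT.
have hx : x \in [set a'; b'] by rewrite -e !inE eqxx orbT.
move: ha hb hx; rewrite !inE => /orP [/eqP aa | /eqP ab]; last by rewrite -ab aH in b'H.
move=> /orP [/eqP ba | /eqP bx]; first by rewrite ba aH in b'H.
by [].
Qed.

Lemma inK2 (e : {set V}) a : inK e -> a \in e -> exists b, b != a /\ e = [set a; b].
Proof.
rewrite /inK => /cards2P [x [y [xy ->]]]; rewrite !inE => /orP [] /eqP ->.
  by exists y; split => //; rewrite eq_sym.
by exists x; split => //; rewrite setUC.
Qed.

Lemma edge_inj (a b b' : V) : b != a -> b' != a -> [set a; b] = [set a; b'] -> b = b'.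
Proof.
move=> ba b'a e.
have : b \in [set a; b'] by rewrite -e !inE eqxx orbT.
by rewrite !inE (negbTE ba) /= => /eqP.
Qed.

Lemma edge_inK (a b : V) : b != a -> inK [set a; b].
Proof. by move=> ba; rewrite /inK cards2 (eq_sym a b) ba. Qed.

Lemma sum_edges (Q : {set {set V}}) a : (forall e, e \in Q -> inK e) ->
  \sum_(b | b != a) ([set a; b] \in Q : nat) = #|[set e in Q | a \in e]|.
Proof.
move=> QK.
rewrite (eq_bigr (fun b => if [set a; b] \in Q then 1 else 0)); last by move=> b _; case: (_ \in Q).
rewrite -big_mkcondr sum1dep_card.
rewrite -(@card_in_imset _ _ (fun b => [set a; b])).
  apply: eq_card => e; rewrite [in RHS]inE; apply/imsetP/andP.
    by case=> b; rewrite inE => /andP [ba bQ] ->; split => //; rewrite !inE eqxx.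
  case=> eQ ae; have [b [ba eb]] := inK2 (QK _ eQ) ae.
  by exists b => //; rewrite inE ba -eb eQ.
by move=> b b'; rewrite !inE => /andP [ba _] /andP [b'a _]; apply: edge_inj.
Qed.

Definition PMB (H : {set V}) q := perfect_matching_B [set H; ~: H] q.

Lemma koenig (H : {set V}) : #|H|.*2 = #|V| -> forall k (M : {set V} -> nat),
  (forall e, 0 < M e -> exists a b, [/\ a \in H, b \notin H & e = [set a; b]]) ->
  (forall a, \sum_(b | b != a) M [set a; b] = k) ->
  exists qs : seq {set {set V}}, [/\ size qs = k,
    (forall q, q \in qs -> PMB H q) &
    forall e, \sum_(q <- qs) (e \in q : nat) = M e].
Proof.
move=> Hc k; elim: k => [|k IH] M Msh Msum.
  exists [::]; split => // e; rewrite big_nil.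
  case: (posnP (M e)) => // /Msh [a [b [aH bH ->]]].
  have := Msum a; move/eqP; rewrite sum_nat_eq0 => /forallP /(_ b).
  have ba : b != a by apply/eqP => ba; rewrite ba aH in bH.
  by rewrite ba /= => /eqP ->.
case: (pickP (fun _ : V => true)) => [u0 _ | V0]; last first.
  exists (nseq k.+1 set0); split; first by rewrite size_nseq.
    move=> q /nseqP [-> _]; split; first by move=> e; rewrite inE.
    by move=> a; have := V0 a.
  move=> e; rewrite big1_seq; last by move=> q /andP [_ /nseqP [-> _]]; rewrite inE.
  by case: (posnP (M e)) => // /Msh [a _]; have := V0 a.
have Msa : forall a, M [set a; a] = 0.
  move=> a; case: (posnP (M [set a; a])) => // /Msh [a' [b' [a'H b'H e]]].
  have h1 : a' \in [set a; a] by rewrite e !inE eqxx.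
  have h2 : b' \in [set a; a] by rewrite e !inE eqxx orbT.
  move: h1 h2; rewrite !inE !orbb => /eqP <- /eqP h; by rewrite h a'H in b'H.
have Mfull : forall a, \sum_b M [set a; b] = k.+1.
  by move=> a; rewrite (bigD1 a) //= Msa add0n Msum.
pose N a := [set b | 0 < M [set a; b]].
have hc : hallc H N.
  move=> S SH.
  pose NS := \bigcup_(x in S) N x.
  rewrite -(@leq_pmul2l k.+1) //.
  have -> : k.+1 * #|S| = \sum_(a in S) \sum_b M [set a; b].
    by rewrite mulnC -sum_nat_const; apply: eq_bigr => a _; rewrite Mfull.
  have -> : k.+1 * #|NS| = \sum_(b in NS) \sum_a M [set a; b].
    rewrite mulnC -sum_nat_const; apply: eq_bigr => b _; rewrite -(Mfull b).
    by apply: eq_bigr => a _; rewrite setUC.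
  rewrite exchange_big /= (bigID (fun b => b \in NS)) /=.
  rewrite [X in _ + X]big1 ?addn0; last first.
    move=> b bNS; apply: big1 => a aS; case: (posnP (M [set a; b])) => // hp.
    by case/negP: bNS; apply/bigcupP; exists a => //; rewrite inE.
  apply: leq_sum => b _.
  rewrite [X in _ <= X](bigID (fun a => a \in S)) /=.
  exact: leq_addr.
have [f [fi fN']] := hall u0 (leqnn #|H|) hc.
have fN : forall a, a \in H -> 0 < M [set a; f a].
  by move=> a aH; have := fN' a aH; rewrite inE.
have fout : forall a, a \in H -> f a \notin H.
  move=> a aH; have [a' [b' [a'H b'H e]]] := Msh _ (fN a aH).
  by have [_ ->] := edge_inv aH a'H b'H e.
have fsurj : f @: H = ~: H.
  apply/eqP; rewrite eqEcard; apply/andP; split.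
    by apply/subsetP => v /imsetP [a aH ->]; rewrite inE fout.
  rewrite card_in_imset // cardsCs setCK.
  by rewrite -Hc -addnn addnK.
pose q := [set [set a; f a] | a in H].
have key : forall v a, a \in H -> (v == a) || (v == f a) ->
    [set e in q | v \in e] = [set [set a; f a]].
  move=> v a aH hv; apply/setP => e; rewrite !inE; apply/andP/eqP.
    case=> /imsetP [a' a'H ->]; rewrite !inE => hv'.
    case/orP: hv => /eqP va; case/orP: hv' => /eqP va'.
    - by rewrite -va -va'.
    - by move: (fout a' a'H); rewrite -va' va aH.
    - by move: (fout a aH); rewrite -va va' a'H.
    - by rewrite (fi a a' aH a'H) // -va -va'.
  move=> ->; split; first by apply/imsetP; exists a.
  by rewrite !inE; case/orP: hv => ->; rewrite ?orbT.
have qPM : PMB H q.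
  split.
    move=> e /imsetP [a aH ->]; split.
      apply: edge_inK; apply/eqP => fa; by move: (fout a aH); rewrite fa aH.
    move=> P; rewrite !inE => /orP [] /eqP ->; rewrite subUset !sub1set.
      by rewrite (negbTE (fout a aH)) andbF.
    by rewrite inE aH.
  move=> v.
  case: (boolP (v \in H)) => vH.
    by rewrite (key v v vH) ?eqxx // cards1.
  have : v \in f @: H by rewrite fsurj inE.
  case/imsetP => a aH va.
  by rewrite (key v a aH) ?va ?eqxx ?orbT // cards1.
have qM : forall e, e \in q -> 0 < M e.
  by move=> e /imsetP [a aH ->]; apply: fN.
pose M' e := M e - (e \in q).
have MM' : forall e, M e = M' e + (e \in q).
  by move=> e; rewrite /M' subnK //; case: (boolP (e \in q)) => // /qM.
have [qs' [s' qs'PM qs'M]] : exists qs' : seq {set {set V}}, [/\ size qs' = k,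
    (forall q, q \in qs' -> PMB H q) &
    forall e, \sum_(q <- qs') (e \in q : nat) = M' e].
  apply: IH.
    move=> e0 he0; apply: Msh; apply: leq_trans he0 _; exact: leq_subr.
  move=> a.
  have := Msum a.
  rewrite (eq_bigr (fun b => M' [set a; b] + ([set a; b] \in q))); last by move=> b _; apply: MM'.
  rewrite big_split /= sum_edges; last by move=> e eq; case: qPM => /(_ e eq) [].
  case: qPM => _ /(_ a) ->.
  by rewrite addn1 => -[].
exists (q :: qs'); split => //=; first by rewrite s'.
  by move=> q0; rewrite inE => /orP [/eqP -> | /qs'PM].
by move=> e; rewrite big_cons qs'M addnC -MM'.
Qed.
End K.

Lemma Rplus_assoc' : associative Rplus.
Proof. by move=> x y z; rewrite Rplus_assoc. Qed.
HB.instance Definition _ := Monoid.isComLaw.Build R R0 Rplus Rplus_assoc' Rplus_comm Rplus_0_l.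

Section DensAll.
Local Open Scope R_scope.

Definition is_rat (r : R) := exists q : Q, r = Q2R q.

Lemma rat_plus x y : is_rat x -> is_rat y -> is_rat (x + y).
Proof. by move=> [p ->] [q ->]; exists (p + q)%Q; rewrite Q2R_plus. Qed.
Lemma rat_mult x y : is_rat x -> is_rat y -> is_rat (x * y).
Proof. by move=> [p ->] [q ->]; exists (p * q)%Q; rewrite Q2R_mult. Qed.
Lemma rat_opp x : is_rat x -> is_rat (- x).
Proof. by move=> [p ->]; exists (- p)%Q; rewrite Q2R_opp. Qed.
Lemma rat_minus x y : is_rat x -> is_rat y -> is_rat (x - y).
Proof. by move=> hx hy; apply: rat_plus => //; apply: rat_opp. Qed.
Lemma rat_inv x : is_rat x -> x <> 0 -> is_rat (/ x).
Proof.
move=> [p ->] h; exists (/ p)%Q; rewrite Q2R_inv //.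
by move=> hp; apply: h; rewrite (Qeq_eqR _ _ hp) /Q2R /=; lra.
Qed.
Lemma rat_div x y : is_rat x -> is_rat y -> y <> 0 -> is_rat (x / y).
Proof. by move=> hx hy h; apply: rat_mult => //; apply: rat_inv. Qed.
Lemma rat0 : is_rat 0. Proof. by exists 0%Q; rewrite /Q2R /=; lra. Qed.
Lemma rat1 : is_rat 1. Proof. by exists 1%Q; rewrite /Q2R /=; lra. Qed.

Lemma rat_approx t eps : 0 < eps -> exists q, is_rat q /\ Rabs (q - t) < eps.
Proof.
move=> he.
have [h1 h2] := archimed (/ eps).
have hi : 0 < / eps by apply: Rinv_0_lt_compat.
have zpos : (0 < up (/ eps))%Z by apply: lt_IZR; lra.
set N := IZR (up (/ eps)) in h1 h2.
have [h3 h4] := archimed (t * N).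
exists (IZR (up (t * N)) / N); split.
  apply: rat_div; [by exists (inject_Z (up (t * N))); rewrite /Q2R /=; lra
                  | by exists (inject_Z (up (/ eps))); rewrite /Q2R /N /=; lra | lra].
have NP : 0 < N by lra.
rewrite Rabs_right.
  apply: (Rmult_lt_reg_r N) => //.
  rewrite Rmult_minus_distr_r /Rdiv Rmult_assoc Rinv_l; last lra.
  have : eps * N > 1.
    have := Rmult_lt_compat_l eps _ _ he h1; rewrite Rinv_r; lra.
  nra.
apply: Rle_ge.
have : t * N < IZR (up (t * N)) by lra.
move=> h; apply: Rle_trans (_ : 0 <= IZR (up (t * N)) / N - IZR (up (t * N)) / N + (IZR (up (t * N)) / N - t)) _; last lra.
have : t < IZR (up (t * N)) / N.
  apply: (Rmult_lt_reg_r N) => //; rewrite /Rdiv Rmult_assoc Rinv_l; lra.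
lra.
Qed.

Section Lhs.
Variable X : eqType.
Definition lhs (vs : seq X) (a y : X -> R) := \big[Rplus/0]_(v <- vs) (a v * y v).

Lemma lhs_nil a y : lhs [::] a y = 0.
Proof. by rewrite /lhs big_nil. Qed.
Lemma lhs_cons v vs a y : lhs (v :: vs) a y = a v * y v + lhs vs a y.
Proof. by rewrite /lhs big_cons. Qed.

Lemma lhs_lin vs a a' c y :
  lhs vs (fun w => a' w - c * a w) y = lhs vs a' y - c * lhs vs a y.
Proof. elim: vs => [|v vs IH]; rewrite ?lhs_nil ?lhs_cons ?IH; lra. Qed.

Lemma lhs_eq vs a y z : (forall w, w \in vs -> y w = z w) -> lhs vs a y = lhs vs a z.
Proof. by move=> h; apply: eq_big_seq => w /h ->. Qed.

Lemma lhs_rat vs a y : (forall w, w \in vs -> is_rat (a w) /\ is_rat (y w)) -> is_rat (lhs vs a y).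
Proof.
elim: vs => [|v vs IH] h; first by rewrite lhs_nil; apply: rat0.
rewrite lhs_cons; apply: rat_plus.
  by have [h1 h2] := h v (mem_head _ _); apply: rat_mult.
by apply: IH => w wv; apply: h; rewrite inE wv orbT.
Qed.

Definition asum (vs : seq X) (a : X -> R) := \big[Rplus/0]_(v <- vs) Rabs (a v).

Lemma asum_ge0 vs a : 0 <= asum vs a.
Proof.
elim: vs => [|v vs IH]; rewrite /asum ?big_nil ?big_cons; first lra.
have := Rabs_pos (a v); rewrite /asum in IH; lra.
Qed.

Lemma lhs_bound vs a y z eps : (forall w, w \in vs -> Rabs (y w - z w) <= eps) ->
  Rabs (lhs vs a y - lhs vs a z) <= asum vs a * eps.
Proof.
elim: vs => [|v vs IH] h.
  by rewrite !lhs_nil /asum big_nil Rminus_0_r Rabs_R0; lra.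
rewrite !lhs_cons /asum big_cons -/(asum vs a).
have h1 : Rabs (lhs vs a y - lhs vs a z) <= asum vs a * eps.
  by apply: IH => w wv; apply: h; rewrite inE wv orbT.
have h2 := h v (mem_head _ _).
have -> : a v * y v + lhs vs a y - (a v * z v + lhs vs a z)
   = a v * (y v - z v) + (lhs vs a y - lhs vs a z) by ring.
apply: Rle_trans (Rabs_triang _ _) _.
rewrite Rabs_mult Rmult_plus_distr_r.
apply: Rplus_le_compat => //.
by apply: Rmult_le_compat_l => //; apply: Rabs_pos.
Qed.

Definition eqn := ((X -> R) * R)%type.
Definition rat_eqn (q : eqn) := (forall v, is_rat (q.1 v)) /\ is_rat q.2.

Lemma density (vs : seq X) : uniq vs -> forall (sys : list eqn),
  (forall q, List.In q sys -> rat_eqn q) ->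
  forall y, (forall q, List.In q sys -> lhs vs q.1 y = q.2) ->
  forall eps, 0 < eps -> exists z, (forall v, v \in vs -> is_rat (z v) /\ Rabs (z v - y v) < eps)
     /\ (forall q, List.In q sys -> lhs vs q.1 z = q.2).
Proof.
elim: vs => [|v vs IH] /=.
  move=> _ sys _ y hy eps _; exists y; split => //.
move=> /andP [vnin uvs] sys hrat y hy eps he.
case: (classic (exists q, List.In q sys /\ q.1 v <> 0)) => [[[a b] [qin /= av]] | hno].
  pose sys' := List.map (fun q : eqn => ((fun w => q.1 w - (q.1 v / a v) * a w),
                                           q.2 - q.1 v / a v * b)) sys.
  have hrat' : forall q, List.In q sys' -> rat_eqn q.
    move=> q /List.in_map_iff [[a' b'] [<- qi]].
    have [ha hb] := hrat _ qi; have [ha0 hb0] := hrat _ qin; rewrite /= in ha hb ha0 hb0.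
    split => [w|] /=.
      by apply: rat_minus => //; apply: rat_mult => //; apply: rat_div.
    by apply: rat_minus => //; apply: rat_mult => //; apply: rat_div.
  have hy' : forall q, List.In q sys' -> lhs vs q.1 y = q.2.
    move=> q /List.in_map_iff [[a' b'] [<- qi]] /=.
    have := hy _ qi; have := hy _ qin; rewrite /= !lhs_cons => e1 e2.
    rewrite lhs_lin.
    have -> : b = a v * y v + lhs vs a y by [].
    rewrite -e2; field; exact: av.
  pose S := asum vs a.
  have Sge : 0 <= S := asum_ge0 vs a.
  have aP : 0 < Rabs (a v) by apply: Rabs_pos_lt.
  pose eps' := eps * Rabs (a v) / (Rabs (a v) + S).
  have he' : 0 < eps'.
    by rewrite /eps'; apply: Rdiv_lt_0_compat; [apply: Rmult_lt_0_compat|]; lra.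
  have [z' [hz'1 hz'2]] := IH uvs sys' hrat' y hy' eps' he'.
  pose z w := if w == v then (b - lhs vs a z') / a v else z' w.
  have zz' : forall w, w \in vs -> z w = z' w.
    by move=> w wv; rewrite /z; case: eqP => // ev; move: wv; rewrite ev (negbTE vnin).
  have eps'le : eps' <= eps.
    rewrite /eps' /Rdiv Rmult_assoc; rewrite -{2}(Rmult_1_r eps).
    apply: Rmult_le_compat_l; first lra.
    apply: (Rmult_le_reg_r (Rabs (a v) + S)); first lra.
    rewrite Rmult_assoc Rinv_l; lra.
  exists z; split.
    move=> w; rewrite inE => /orP [/eqP -> | wv]; last first.
      by rewrite zz' //; have [h1 h2] := hz'1 w wv; split => //; lra.
    rewrite /z eqxx; split.
      have [ha hb] := hrat _ qin; rewrite /= in ha hb.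
      apply: rat_div => //; apply: rat_minus => //; apply: lhs_rat => w0 wv0.
      by split => //; have [] := hz'1 w0 wv0.
    have ey : y v = (b - lhs vs a y) / a v.
      have := hy _ qin; rewrite /= lhs_cons => <-; field; exact: av.
    rewrite ey.
    have -> : (b - lhs vs a z') / a v - (b - lhs vs a y) / a v
            = (lhs vs a y - lhs vs a z') / a v by field.
    rewrite /Rdiv Rabs_mult Rabs_inv.
    have hb := lhs_bound a (fun w wv => Rlt_le _ _ (proj2 (hz'1 w wv)) : Rabs (z' w - y w) <= eps').
    rewrite Rabs_minus_sym in hb.
    apply: (Rmult_lt_reg_r (Rabs (a v))) => //.
    rewrite Rmult_assoc Rinv_l; last lra.
    rewrite Rmult_1_r.
    apply: Rle_lt_trans (_ : Rabs (lhs vs a y - lhs vs a z') <= S * eps') _.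
      by rewrite Rabs_minus_sym; rewrite Rabs_minus_sym in hb; exact: hb.
    rewrite /eps'.
    have -> : S * (eps * Rabs (a v) / (Rabs (a v) + S)) = eps * Rabs (a v) * (S / (Rabs (a v) + S)) by field; lra.
    rewrite -{2}(Rmult_1_r (eps * Rabs (a v))).
    apply: Rmult_lt_compat_l; first by apply: Rmult_lt_0_compat.
    apply: (Rmult_lt_reg_r (Rabs (a v) + S)); first lra.
    rewrite /Rdiv Rmult_assoc Rinv_l; lra.
  move=> [a' b'] qi /=.
  rewrite lhs_cons (lhs_eq a' zz').
  have := hz'2 ((fun w => a' w - (a' v / a v) * a w), b' - a' v / a v * b).
  rewrite lhs_lin /= => /(_ (List.in_map _ _ _ qi)) e.
  rewrite /z eqxx.
  have -> : lhs vs a' z' = b' - a' v / a v * b + a' v / a v * lhs vs a z' by lra.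
  field; exact: av.
have hno' : forall q, List.In q sys -> q.1 v = 0.
  move=> q qi; apply: NNPP => hq; apply: hno; by exists q.
have hy' : forall q, List.In q sys -> lhs vs q.1 y = q.2.
  by move=> q qi; rewrite -(hy q qi) lhs_cons hno' //; ring.
have [z' [hz'1 hz'2]] := IH uvs sys hrat y hy' eps he.
have [t [tr tc]] := rat_approx (y v) he.
pose z w := if w == v then t else z' w.
have zz' : forall w, w \in vs -> z w = z' w.
  by move=> w wv; rewrite /z; case: eqP => // ev; move: wv; rewrite ev (negbTE vnin).
exists z; split.
  move=> w; rewrite inE => /orP [/eqP -> | wv]; first by rewrite /z eqxx.
  by rewrite zz' //; apply: hz'1.
move=> q qi; rewrite lhs_cons hno' // (lhs_eq q.1 zz') hz'2 //; ring.
Qed.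
End Lhs.

End DensAll.

Lemma sumR_INR (I : Type) (s : seq I) (P : pred I) (f : I -> nat) (t : R) :
  \big[Rplus/R0]_(i <- s | P i) Rmult (INR (f i)) t = Rmult (INR (\sum_(i <- s | P i) f i)) t.
Proof.
elim: s => [|i s IH]; first by rewrite !big_nil /=; lra.
rewrite !big_cons; case: (P i) => //; rewrite IH plus_INR; lra.
Qed.

Lemma sumR_const (I : finType) (A : {pred I}) (c : R) :
  \big[Rplus/R0]_(i in A) c = Rmult (INR #|A|) c.
Proof.
rewrite big_const; elim: #|A| => [|n IH] /=; first lra.
by rewrite IH; case: n {IH} => [|n] /=; lra.
Qed.

Lemma sumR_ge0 (I : Type) (s : seq I) (P : pred I) (F : I -> R) :
  (forall i, P i -> Rle R0 (F i)) -> Rle R0 (\big[Rplus/R0]_(i <- s | P i) F i).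
Proof.
move=> h; apply: (big_ind (fun x => Rle R0 x)) => //; first lra.
by move=> x y hx hy; lra.
Qed.

Section VecLemmas.
Variable V : finType.

Lemma foldr_vadd1 (s : seq (vec V)) e : (foldr (@vadd V) (vzero V) s).1 e = \sum_(w <- s) w.1 e.
Proof. elim: s => [|w s IH] /=; first by rewrite big_nil ffunE. by rewrite big_cons ffunE IH. Qed.
Lemma foldr_vadd2 (s : seq (vec V)) c : (foldr (@vadd V) (vzero V) s).2 c = \sum_(w <- s) w.2 c.
Proof. elim: s => [|w s IH] /=; first by rewrite big_nil ffunE. by rewrite big_cons ffunE IH. Qed.

Lemma mem_In (T : eqType) (x : T) (s : seq T) : x \in s -> List.In x s.
Proof. elim: s => [|y s IH] //=; rewrite inE => /orP [/eqP -> | /IH]; by [left | right]. Qed.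

End VecLemmas.

Lemma back (V : finType) (E : {set {set V}}) (r : nat) (HA : 'I_r -> {set {set V}}) :
  regular_graph E r -> HAP_table HA ->
  (exists v : vec V, Nbar (@PM V) v /\
     (forall e, inK e -> v.1 e = nat_of_bool (e \in E)) /\
     (forall c, is_eqpart c -> v.2 c = #|[set d : 'I_r | HA d == c]|)) ->
  P_nonempty E HA.
Proof.
move=> [EK Ereg] hHA [v [[[vK vC] [k [k1 [s [sPM sv]]]]] [v1 v2]]].
have s1 : forall e, \sum_(w <- s) w.1 e = k * v.1 e.
  by move=> e; rewrite -foldr_vadd1 -sv ffunE.
have s2 : forall c, \sum_(w <- s) w.2 c = k * v.2 c.
  by move=> c; rewrite -foldr_vadd2 -sv ffunE.
have wprop : forall w, w \in s -> exists c0 q, [/\ is_eqpart c0, perfect_matching_B c0 q & w = chiEc q c0].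
  by move=> w /mem_In /sPM [c0 [q [h1 [h2 h3]]]]; exists c0, q.
pose N c e := \sum_(w <- s) w.2 c * w.1 e.
pose nC c := #|[set d : 'I_r | HA d == c]|.
have F_sumc : forall e, \sum_c N c e = k * v.1 e.
  move=> e; rewrite /N exchange_big /= -s1 big_seq [RHS]big_seq; apply: eq_bigr => w /wprop [c0 [q [_ _ ->]]].
  rewrite (bigD1 c0) //= !ffunE eqxx mul1n big1 ?addn0 // => c /negbTE.
  by rewrite ffunE => ->.
have F_le1 : forall c e, N c e <= k * v.2 c.
  move=> c e; rewrite -s2 /N big_seq [X in _ <= X]big_seq; apply: leq_sum => w /wprop [c0 [q [_ _ ->]]].
  by rewrite !ffunE; case: (e \in q); rewrite ?muln1 ?muln0.
have F_le2 : forall c e, N c e <= k * v.1 e.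
  move=> c e; rewrite -s1 /N big_seq [X in _ <= X]big_seq; apply: leq_sum => w /wprop [c0 [q [_ _ ->]]].
  by rewrite !ffunE; case: (_ == _); rewrite ?mul1n ?mul0n.
have F0 : forall c e, nC c = 0 -> N c e = 0.
  move=> c e h; apply/eqP; rewrite -leqn0; apply: leq_trans (F_le1 c e) _.
  case: (boolP (is_eqpart c)) => hc; first by rewrite v2 // -/(nC c) h muln0.
  by rewrite vC // muln0.
have F_nE : forall c e, inK e -> e \notin E -> N c e = 0.
  move=> c e eK eE; apply/eqP; rewrite -leqn0; apply: leq_trans (F_le2 c e) _.
  by rewrite v1 // (negbTE eE) muln0.
have F_deg : forall d a, \sum_(b | b != a) N (HA d) [set a; b] = k * nC (HA d).
  move=> d a; rewrite /N /nC exchange_big /= -(v2 _ (hHA d)) -s2 big_seq [RHS]big_seq.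
  apply: eq_bigr => w /wprop [c0 [q [_ [qK qdeg] ->]]].
  rewrite -big_distrr /=.
  rewrite (eq_bigr (fun b => ([set a; b] \in q) : nat)); last by move=> b _; rewrite ffunE.
  rewrite sum_edges; last by move=> e /qK [].
  by rewrite qdeg muln1.
have F_P : forall d (e P : {set V}), P \in HA d -> e \subset P -> N (HA d) e = 0.
  move=> d e P PH eP; rewrite /N big_seq; apply: big1 => w /wprop [c0 [q [_ [qK _] ->]]].
  rewrite !ffunE; case: eqP => [hc | _] //=; subst c0.
  case: (boolP (e \in q)) => // /qK [_ /(_ P PH)]; by rewrite eP.
have nCpos : forall d, 0 < nC (HA d).
  by move=> d; rewrite /nC card_gt0; apply/set0Pn; exists d; rewrite inE.
have kR : Rlt R0 (INR k) by apply: lt_0_INR; apply/ltP.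
pose x e d := Rdiv (INR (N (HA d) e)) (Rmult (INR k) (INR (nC (HA d)))).
have x_ge0 : forall e d, Rle R0 (x e d).
  move=> e d; rewrite /x; apply: Rmult_le_pos; first by apply: pos_INR.
  apply: Rlt_le; apply: Rinv_0_lt_compat; apply: Rmult_lt_0_compat => //.
  by apply: lt_0_INR; apply/ltP.
have sum1 : forall e, e \in E -> \big[Rplus/R0]_(d < r) x e d = R1.
  move=> e eE.
  rewrite (partition_big HA xpredT) //=.
  rewrite (eq_bigr (fun c => Rmult (INR (N c e)) (Rinv (INR k)))).
    rewrite sumR_INR F_sumc v1 ?EK // eE muln1; field; lra.
  move=> c _.
  rewrite (eq_bigr (fun _ => Rdiv (INR (N c e)) (Rmult (INR k) (INR (nC c))))); last by move=> d /eqP <-.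
  rewrite (eq_bigl (fun d => d \in [set d : 'I_r | HA d == c])); last by move=> d; rewrite inE.
  rewrite sumR_const -/(nC c).
  case: (posnP (nC c)) => hn.
    by rewrite F0 // hn /=; lra.
  have : Rlt R0 (INR (nC c)) by apply: lt_0_INR; apply/ltP.
  move=> h; field; lra.
exists x; split => //; split.
  by move=> e d eK eE; rewrite /x F_nE // /Rdiv Rmult_0_l.
split.
  move=> d a.
  rewrite (eq_bigl (fun b => b != a)); last by move=> b.
  rewrite (eq_bigr (fun b => Rmult (INR (N (HA d) [set a; b])) (Rinv (Rmult (INR k) (INR (nC (HA d))))))) //.
  rewrite sumR_INR F_deg mult_INR.
  have : Rlt R0 (INR (nC (HA d))) by apply: lt_0_INR; apply/ltP.
  move=> h; field; lra.
split.
  move=> e d eE; split; first by apply: x_ge0.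
  rewrite -(sum1 e eE) (bigD1 d) //=.
  have := @sumR_ge0 _ (index_enum 'I_r) (fun i => i != d) (x e) (fun i _ => x_ge0 e i) => h; rewrite -{1}(Rplus_0_r (x e d)); apply: Rplus_le_compat_l; exact: h.
move=> e d eE /existsP [P /andP [PH eP]].
by rewrite /x (F_P d e P) // /Rdiv Rmult_0_l.
Qed.

Lemma lhs_ind (X : finType) (P : pred X) (z : X -> R) :
  lhs (index_enum X) (fun p => if P p then R1 else R0) z = \big[Rplus/R0]_(p | P p) z p.
Proof.
rewrite /lhs [RHS]big_mkcond; apply: eq_bigr => p _; case: (P p); ring.
Qed.

Lemma sum_edge_reindex (V : finType) (Rt : Type) (idx : Rt) (op : Monoid.com_law idx)
  (G : {set V} -> Rt) (a : V) :
  \big[op/idx]_(e | inK e && (a \in e)) G e = \big[op/idx]_(b | b != a) G [set a; b].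
Proof.
rewrite (eq_bigl (mem [set [set a; b] | b in [set b | b != a]])).
  rewrite big_imset; last by move=> b b'; rewrite !inE => ba b'a; apply: edge_inj.
  by apply: eq_bigl => b; rewrite inE.
move=> e; change ((inK e && (a \in e)) = (e \in [set [set a; b] | b in [set b | b != a]])).
apply/andP/imsetP.
  by case=> eK ae; have [b [ba ->]] := inK2 eK ae; exists b; rewrite ?inE.
case=> b; rewrite inE => ba ->; split; first by apply: edge_inK.
by rewrite !inE eqxx.
Qed.

Lemma INR_sum (I : Type) (s : seq I) (P : pred I) (f : I -> nat) :
  INR (\sum_(i <- s | P i) f i) = \big[Rplus/R0]_(i <- s | P i) INR (f i).
Proof.
elim: s => [|i s IH]; first by rewrite !big_nil.
by rewrite !big_cons; case: (P i) => //; rewrite plus_INR IH.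
Qed.

Lemma sumR_mull (I : Type) (s : seq I) (P : pred I) (F : I -> R) (c : R) :
  \big[Rplus/R0]_(i <- s | P i) Rmult c (F i) = Rmult c (\big[Rplus/R0]_(i <- s | P i) F i).
Proof.
elim: s => [|i s IH]; first by rewrite !big_nil /=; ring.
by rewrite !big_cons; case: (P i) => //; rewrite IH; ring.
Qed.

Lemma pos_min (X : Type) (l : seq X) (f : X -> R) :
  exists eps, Rlt R0 eps /\ forall p, List.In p l -> Rlt R0 (f p) -> Rle eps (f p).
Proof.
elim: l => [|p l [eps [he h]]]; first by exists R1; split => //; lra.
case: (Rlt_dec R0 (f p)) => hp.
  exists (Rmin eps (f p)); split; first by apply: Rmin_glb_lt.
  move=> q [<- _ | ql hq]; first by apply: Rmin_r.
  by apply: Rle_trans (Rmin_l _ _) (h q ql hq).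
exists eps; split => // q [<- | ql] hq; [by [] | exact: h].
Qed.

Lemma common_den (X : Type) (l : seq X) (z : X -> R) :
  (forall p, List.In p l -> is_rat (z p)) ->
  exists k : nat, (0 < k)%N /\ forall p, List.In p l -> exists m : Z, Rmult (INR k) (z p) = IZR m.
Proof.
elim: l => [|p l IH] h.
  by exists 1%N; split.
have [k [k0 hk]] := IH (fun q ql => h q (or_intror ql)).
have [[n d] e] := h p (or_introl erefl).
exists (k * Pos.to_nat d)%N; split.
  by rewrite muln_gt0 k0 /=; apply/ltP; apply: Pos2Nat.is_pos.
have dR : INR (Pos.to_nat d) = IZR (Z.pos d) by rewrite INR_IZR_INZ positive_nat_Z.
move=> q [<- | ql].
  exists (Z.of_nat k * n)%Z; rewrite e /Q2R /= -multE mult_INR dR mult_IZR -INR_IZR_INZ.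
  field; apply: IZR_neq => //.
have [m hm] := hk q ql.
exists (m * Z.pos d)%Z; rewrite -multE mult_INR dR mult_IZR -hm; ring.
Qed.

Lemma In_mem (T : eqType) (x : T) (s : seq T) : List.In x s -> x \in s.
Proof. elim: s => [|y s IH] //= [-> | /IH h]; rewrite inE ?eqxx ?h ?orbT //. Qed.

Lemma fwd (V : finType) (E : {set {set V}}) (r : nat) (HA : 'I_r -> {set {set V}}) :
  regular_graph E r -> HAP_table HA -> P_nonempty E HA ->
  exists v : vec V, Nbar (@PM V) v /\
     (forall e, inK e -> v.1 e = nat_of_bool (e \in E)) /\
     (forall c, is_eqpart c -> v.2 c = #|[set d : 'I_r | HA d == c]|).
Proof.
move=> [EK _] hHA [x [x1 [x0 [x2 [x3 x4]]]]].
pose y (p : {set V} * 'I_r) := if p.1 \in E then x p.1 p.2 else R0.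
have y_ge0 : forall p, Rle R0 (y p).
  move=> [e d]; rewrite /y /=; case: ifP => eE; first by case: (x3 e d eE).
  by apply: Rle_refl.
have yA : forall e, e \in E -> \big[Rplus/R0]_(d < r) y (e, d) = R1.
  by move=> e eE; rewrite -(x1 e eE); apply: eq_bigr => d _; rewrite /y /= eE.
have yB : forall d a, \big[Rplus/R0]_(b | b != a) y ([set a; b], d) = R1.
  move=> d a; rewrite -(x2 d a).
  apply: eq_big => [b|b ba]; first by [].
  rewrite /y /=; case: ifP => // hE; rewrite x0 //; first by apply: edge_inK.
  by rewrite hE.
pose eqA (e : {set V}) : eqn ({set V} * 'I_r)%type :=
  (fun p : {set V} * 'I_r => if p.1 == e then R1 else R0, R1).
pose eqB (da : 'I_r * V) : eqn ({set V} * 'I_r)%type :=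
  (fun p : {set V} * 'I_r => if (p.2 == da.1) && (inK p.1 && (da.2 \in p.1)) then R1 else R0, R1).
pose zb (p : {set V} * 'I_r) := if Req_EM_T (y p) R0 then true else false.
pose eqZ (p0 : {set V} * 'I_r) : eqn ({set V} * 'I_r)%type :=
  (fun p : {set V} * 'I_r => if p == p0 then R1 else R0, R0).
pose sys := map eqA (enum E) ++ (map eqB (index_enum ('I_r * V)%type)
            ++ map eqZ [seq p <- index_enum ({set V} * 'I_r)%type | zb p]).
have lhsA : forall e w, lhs (index_enum ({set V} * 'I_r)%type) (eqA e).1 w
                        = \big[Rplus/R0]_(d < r) w (e, d).
  move=> e w; rewrite lhs_ind.
  rewrite (eq_bigr (fun p => w (p.1, p.2))); last by move=> [] .
  rewrite (eq_bigl (fun p => (p.1 == e) && xpredT p.2)); last by move=> p; rewrite andbT.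
  rewrite -(pair_big_dep (fun i => i == e) (fun _ => xpredT) (fun i j => w (i, j))) /=.
  by rewrite big_pred1_eq.
have lhsB : forall d a w, lhs (index_enum ({set V} * 'I_r)%type) (eqB (d, a)).1 w
                        = \big[Rplus/R0]_(b | b != a) w ([set a; b], d).
  move=> d a w; rewrite lhs_ind.
  rewrite (eq_bigr (fun p => w (p.1, p.2))); last by move=> [] .
  rewrite (eq_bigl (fun p => (inK p.1 && (a \in p.1)) && (p.2 == d))); last by move=> p; rewrite andbC.
  rewrite -(pair_big_dep (fun i => inK i && (a \in i)) (fun _ j => j == d) (fun i j => w (i, j))) /=.
  rewrite (eq_bigr (fun i => w (i, d))); last by move=> i _; rewrite big_pred1_eq.
  by rewrite (sum_edge_reindex _ (fun i => w (i, d))).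
have lhsZ : forall p0 w, lhs (index_enum ({set V} * 'I_r)%type) (eqZ p0).1 w = w p0.
  by move=> p0 w; rewrite lhs_ind big_pred1_eq.
have inSys : forall (P : eqn ({set V} * 'I_r)%type -> Prop),
    (forall e, e \in E -> P (eqA e)) -> (forall da, P (eqB da)) ->
    (forall p, y p = R0 -> P (eqZ p)) -> forall q, List.In q sys -> P q.
  move=> P hA hB hZ q; rewrite /sys => /List.in_app_iff [|/List.in_app_iff []].
  - by move=> /List.in_map_iff [e [<- /In_mem]]; rewrite mem_enum; apply: hA.
  - by move=> /List.in_map_iff [da [<- _]]; apply: hB.
  - move=> /List.in_map_iff [p [<- /In_mem]]; rewrite mem_filter => /andP [hp _].
    by apply: hZ; move: hp; rewrite /zb; case: Req_EM_T.
have hrat : forall q, List.In q sys -> rat_eqn q.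
  apply: inSys.
  - by move=> e _; split => [p|] /=; [case: ifP => _; [apply: rat1 | apply: rat0] | apply: rat1].
  - by move=> da; split => [p|] /=; [case: ifP => _; [apply: rat1 | apply: rat0] | apply: rat1].
  - by move=> p _; split => [p'|] /=; [case: ifP => _; [apply: rat1 | apply: rat0] | apply: rat0].
have hy : forall q, List.In q sys -> lhs (index_enum ({set V} * 'I_r)%type) q.1 y = q.2.
  apply: inSys.
  - by move=> e eE; rewrite lhsA yA.
  - by move=> [d a]; rewrite lhsB yB.
  - by move=> p hp; rewrite lhsZ hp.
have [eps [he heps]] := pos_min (index_enum ({set V} * 'I_r)%type) y.
have [z [hz1 hz2]] := density (index_enum_uniq _) hrat hy he.
have zZ : forall p, y p = R0 -> z p = R0.
  move=> p hp; rewrite -(lhsZ p z); apply: hz2.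
  rewrite /sys; apply: List.in_or_app; right; apply: List.in_or_app; right.
  apply: List.in_map; apply: mem_In; rewrite mem_filter mem_index_enum andbT /zb.
  by case: Req_EM_T.
have z_ge0 : forall p, Rle R0 (z p).
  move=> p; case: (y_ge0 p) => hp; last by rewrite zZ ?hp //; apply: Rle_refl.
  have := heps p (mem_In (mem_index_enum p)) hp.
  have [_ h] := hz1 p (mem_index_enum p).
  move: h; rewrite /Rabs; case: Rcase_abs => c h1 h2; lra.
have zA : forall e, e \in E -> \big[Rplus/R0]_(d < r) z (e, d) = R1.
  move=> e eE; rewrite -lhsA; have := hz2 (eqA e); apply.
  by rewrite /sys; apply: List.in_or_app; left; apply: List.in_map; apply: mem_In; rewrite mem_enum.
have zB : forall d a, \big[Rplus/R0]_(b | b != a) z ([set a; b], d) = R1.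
  move=> d a; rewrite -lhsB; have := hz2 (eqB (d, a)); apply.
  rewrite /sys; apply: List.in_or_app; right; apply: List.in_or_app; left.
  by apply: List.in_map; apply: mem_In; apply: mem_index_enum.
have [k [k0 hk]] := @common_den _ (index_enum ({set V} * 'I_r)%type) z (fun p hp => proj1 (hz1 p (In_mem hp))).
have hM : forall p, exists m : nat, Rmult (INR k) (z p) = INR m.
  move=> p; have [m hm] := hk p (mem_In (mem_index_enum p)).
  have m0 : (0 <= m)%Z.
    apply: le_IZR; rewrite -hm; apply: Rmult_le_pos; [apply: pos_INR | apply: z_ge0].
  by exists (Z.to_nat m); rewrite hm INR_IZR_INZ Z2Nat.id.
pose M p := proj1_sig (constructive_indefinite_description _ (hM p)).
have hMdef : forall p, Rmult (INR k) (z p) = INR (M p).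
  by move=> p; rewrite /M; case: constructive_indefinite_description.
have Mz : forall p, z p = R0 -> M p = 0%N.
  move=> p hp; apply: INR_eq; rewrite -hMdef hp /=; ring.
have hQ : forall d, exists qs : seq {set {set V}}, [/\ size qs = k,
     forall q, q \in qs -> perfect_matching_B (HA d) q &
     forall e, \sum_(q <- qs) (e \in q : nat) = M (e, d)].
  move=> d; have /existsP [H /andP [/eqP HAd /eqP Hc]] := hHA d.
  rewrite HAd.
  have hsh : forall e, 0 < M (e, d) -> exists a b, [/\ a \in H, b \notin H & e = [set a; b]].
    move=> e hMe.
    have zne : z (e, d) <> R0 by move=> h; rewrite (Mz _ h) in hMe.
    have yne : y (e, d) <> R0 by move=> h; apply: zne; apply: zZ.
    have eE : e \in E by move: yne; rewrite /y /=; case: ifP.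
    have xne : x e d <> R0 by move: yne; rewrite /y /= eE.
    have nP : ~~ [exists P in HA d, e \subset P].
      by apply/negP => hP; apply: xne; apply: x4.
    have /cards2P [u [w [uw ew]]] := EK e eE.
    have PH : forall P, P \in HA d -> ~~ (e \subset P).
      by move=> P PH; apply/negP => eP; case/negP: nP; apply/existsP; exists P; rewrite PH eP.
    rewrite HAd in PH.
    case: (boolP (u \in H)) => uH.
      case: (boolP (w \in H)) => wH.
        by have := PH H; rewrite !inE eqxx ew subUset !sub1set uH wH => /(_ isT).
      by exists u, w.
    case: (boolP (w \in H)) => wH.
      by exists w, u; split => //; rewrite ew setUC.
    by have := PH (~: H); rewrite !inE eqxx orbT ew subUset !sub1set !inE uH wH => /(_ isT).
  have hsum : forall a, \sum_(b | b != a) M ([set a; b], d) = k.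
    move=> a; apply: INR_eq; rewrite INR_sum.
    rewrite (eq_bigr (fun b => Rmult (INR k) (z ([set a; b], d)))); last by move=> b _; rewrite hMdef.
    by rewrite sumR_mull zB Rmult_1_r.
  have [qs [h1 h2 h3]] := koenig Hc (M := fun e => M (e, d)) hsh hsum.
  by exists qs; split.
pose QS d := proj1_sig (constructive_indefinite_description _ (hQ d)).
have hQS : forall d, [/\ size (QS d) = k,
     forall q, q \in QS d -> perfect_matching_B (HA d) q &
     forall e, \sum_(q <- QS d) (e \in q : nat) = M (e, d)].
  by move=> d; rewrite /QS; case: constructive_indefinite_description.
pose v : vec V := ([ffun e => nat_of_bool (e \in E)], [ffun c => #|[set d : 'I_r | HA d == c]|]).
pose s := flatten [seq [seq chiEc q (HA d) | q <- QS d] | d <- index_enum 'I_r].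
have cnt0 : forall c, ~~ is_eqpart c -> #|[set d : 'I_r | HA d == c]| = 0%N.
  move=> c hc; apply/eqP; rewrite cards_eq0; apply/eqP/setP => d; rewrite !inE.
  by apply/negbTE/eqP => hd; move: hc; rewrite -hd hHA.
exists v; split; last by split => [e _|c _]; rewrite ffunE.
split.
  split => [e hnK|c hc]; rewrite ffunE //.
  by case: (boolP (e \in E)) => // /EK hK; rewrite hK in hnK.
  by rewrite cnt0.
exists k; split => //; exists s; split.
  move=> w /In_mem /flattenP [sd /mapP [d _ ->] /mapP [q qin ->]].
  exists (HA d), q; split; first exact: hHA.
  by split => //; case: (hQS d) => _ /(_ q qin).
rewrite /vscale [RHS]surjective_pairing; congr (_, _); apply/ffunP.
  move=> e; rewrite !ffunE foldr_vadd1 big_flatten big_map /=.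
  rewrite (eq_bigr (fun d => M (e, d))); last first.
    move=> d _; rewrite big_map; case: (hQS d) => _ _ <-.
    by apply: eq_bigr => q _; rewrite ffunE.
  apply: INR_eq; rewrite INR_sum.
  rewrite (eq_bigr (fun d => Rmult (INR k) (z (e, d)))); last by move=> d _; rewrite hMdef.
  rewrite sumR_mull.
  case: (boolP (e \in E)) => eE.
    by rewrite zA // muln1 Rmult_1_r.
  rewrite big1 ?muln0 /=; first ring.
  by move=> d _; apply: zZ; rewrite /y /= (negbTE eE).
move=> c; rewrite !ffunE foldr_vadd2 big_flatten big_map /=.
rewrite (eq_bigr (fun d => k * (HA d == c))%N); last first.
  move=> d _; rewrite big_map.
  rewrite (eq_bigr (fun _ => nat_of_bool (HA d == c))); last by move=> q _; rewrite ffunE eq_sym.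
  by rewrite big_const_seq count_predT iter_addn_0 mulnC; case: (hQS d) => -> _ _.
rewrite -big_distrr /=; congr (_ * _)%N.
by rewrite -sum1dep_card big_mkcond /=; apply: eq_bigr => d _; case: (HA d == c).
Qed.

Theorem mainTheorem2 (V : finType) (E : {set {set V}}) (r : nat)
  (HA : 'I_r -> {set {set V}}) :
  ~~ odd #|V| ->
  regular_graph E r ->
  HAP_table HA ->
  (P_nonempty E HA <->
   exists v : vec V, Nbar (@PM V) v /\
     (forall e, inK e -> v.1 e = nat_of_bool (e \in E)) /\
     (forall c, is_eqpart c -> v.2 c = #|[set d : 'I_r | HA d == c]|)).
Proof.
move=> _ hreg hHA; split; [exact: fwd | exact: back].
Qed.
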